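(* Let $\mu$ be a non-homogeneous Gibbs capacity and $\eta\in(0,1)$. With probability 1, for every $x\in[0,1]^d$, $$\liminf_{j\to\infty}\frac{\log_2\widetilde{\mathsf M}_\mu(I_{x_{|j}})}{-j}\ \ge\ H_\ell(\eta_\ell).$$
   Context: Fix $d\ge1$; $\Sigma_j$ is the set of words of length $j$ over $\{0,1\}^d$, $\Sigma^*=\bigcup_{j\ge1}\Sigma_j$, $\Sigma=(\{0,1\}^d)^{\mathbb N_+}$ with standard ultrametric and shift $\sigma$, $[w]$ the cylinder of $w$, $|w|$ the length, $wv$ concatenation; for $w\in\Sigma_j$, $I_w=\prod_{i=1}^d[x_w^{(i)},x_w^{(i)}+2^{-j}]$, $x_w^{(i)}=\sum_{k=1}^jw_k^{(i)}2^{-k}$. For $w\in\Sigma_j$, $\mathcal N_j(w)$ is the set of $u\in\Sigma_j$ such that $I_u$ equals or is a neighbour (shares a boundary point) of $I_w$. A point $x\in[0,1]^d$ is coded by the binary expansions of its coordinates (lexicographically largest for dyadic coordinates), $x_{|j}$ denoting the prefix of length $j$. A Gibbs capacity is $\mu(I_w)=K\nu([w])^\alpha e^{-\beta|w|}$ with $K>0$, $(\alpha,\beta)\in[0,\infty)^2\setminus\{(0,0)\}$, $\nu$ a Gibbs measure on $\Sigma$ for a Hölder potential $\psi$: $C^{-1}e^{\Psi([w])-|w|P(\sigma,\psi)}\le\nu([w])\le Ce^{\Psi([w])-|w|P(\sigma,\psi)}$, $\Psi([w])=\sup_{t\in[w]}\sum_{i<|w|}\psi(\sigma^it)$, $P$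 the pressure. Non-homogeneous: $\alpha>0$ and $\psi$ not cohomologous to a constant. $\tau_\mu(q)=\lim_j-\frac1j\log_2\sum_{w\in\Sigma_j}\mu(I_w)^q$ and $D_\mu=\tau_\mu^*$ (Legendre transform $\inf_q(qH-\tau_\mu(q))$); $H_\ell(\eta_\ell)=\min\{H\ge0:D_\mu(H)\ge d(1-\eta)\}$. Sampling: $(p_w)$ independent Bernoulli with $\mathbb P(p_w=1)=2^{-d(1-\eta)|w|}$; $\mathsf M_\mu(I_w)=\max\{\mu(I_{wv}):v\in\Sigma^*,p_{wv}=1\}$ and $\widetilde{\mathsf M}_\mu(I_w)=\max_{u\in\mathcal N_{|w|}(w)}\mathsf M_\mu(I_u)$. *)

(* Defs.v *)
From HB Require Import structures.
From mathcomp Require Import all_boot all_order all_algebra.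
From mathcomp Require Import all_classical all_reals all_analysis.
Set Implicit Arguments. Unset Strict Implicit. Unset Printing Implicit Defensive.
Import Order.TTheory GRing.Theory Num.Theory.
Import numFieldNormedType.Exports.
Local Open Scope classical_set_scope.
Local Open Scope ring_scope.

Definition letter (d : nat) := {ffun 'I_d -> bool}.
HB.instance Definition _ (d : nat) := Finite.on (letter d).
HB.instance Definition _ (d : nat) := isPointed.Build (letter d) [ffun _ => false].
(* Finite words: sequences of letters; Sigma^* = words of length >= 1. *)
Definition word (d : nat) := seq (letter d).
(* Sigma = ({0,1}^d)^{N_+}; position k >= 1 of the paper is index k-1 here. *)
Definition seqspace (d : nat) := nat -> letter d.


Definition shift d (t : seqspace d) : seqspace d := fun n => t n.+1.
Definition cyl d (w : word d) : set (seqspace d) :=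
  [set t | forall k, (k < size w)%N -> t k = nth [ffun _ => false] w k].
Definition cylinders d : set (set (seqspace d)) := [set cyl w | w in [set: word d]].
(* Sigma as a measurable space: the sigma-algebra generated by cylinders
   (= the Borel sigma-algebra of the ultrametric product topology). *)
Definition Sigma (d : nat) : measurableType _ := g_sigma_algebraType (@cylinders d).

(* s and t agree on their first n letters, i.e. dist(s,t) <= 2^{-n} for the
   standard ultrametric dist(s,t) = 2^{-(length of common xprefix)}. *)
Definition agree d (n : nat) (s t : seqspace d) := forall k, (k < n)%N -> s k = t k.

Section Potentials.
Variables (R : realType) (d : nat).

Definition holder (psi : seqspace d -> R) :=
  exists C gam : R, 0 < C /\ 0 < gam /\
    forall n s t, agree n s t -> `|psi s - psi t| <= C * (2 `^ (- (gam * n%:R))).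

Definition ucontinuous (u : seqspace d -> R) :=
  forall t (e : R), 0 < e -> exists n, forall s, agree n s t -> `|u s - u t| < e.

Definition cohomologous_to_const (psi : seqspace d -> R) :=
  exists (u : seqspace d -> R) (c : R), ucontinuous u /\
    forall t, psi t = u (shift t) - u t + c.

Definition birkhoff (psi : seqspace d -> R) (n : nat) (t : seqspace d) : R :=
  \sum_(i < n) psi (iter i (@shift d) t).

Definition Psi (psi : seqspace d -> R) (w : word d) : R :=
  sup [set birkhoff psi (size w) t | t in cyl w].

Definition pressure (psi : seqspace d -> R) : R :=
  limn (fun n : nat => n%:R^-1 *
    ln (\sum_(w : n.-tuple (letter d)) expR (Psi psi (tval w)))).

Definition gibbs (psi : seqspace d -> R) (nu : probability (Sigma d) R) :=
  exists C : R, 0 < C /\ forall w : word d, (0 < size w)%N ->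
    C^-1 * expR (Psi psi w - (size w)%:R * pressure psi) <= fine (nu (cyl w)) /\
    fine (nu (cyl w)) <= C * expR (Psi psi w - (size w)%:R * pressure psi).

(* mu(I_w) = K nu([w])^alpha e^{-beta |w|} *)
Definition gibbs_cap (K alpha beta : R) (nu : probability (Sigma d) R)
    (w : word d) : R :=
  K * (fine (nu (cyl w))) `^ alpha * expR (- (beta * (size w)%:R)).

Definition log2 (x : R) : R := ln x / ln 2.

Definition tau_mu (mu : word d -> R) (q : R) : R :=
  limn (fun j : nat => - (j%:R^-1 *
    log2 (\sum_(w : j.-tuple (letter d)) (mu (tval w)) `^ q))).

Definition D_mu (mu : word d -> R) (H : R) : \bar R :=
  ereal_inf [set ((q * H - tau_mu mu q)%:E) | q in [set: R]].

Definition H_ell (mu : word d -> R) (eta : R) : R :=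
  inf [set H : R | 0 <= H /\ ((d%:R * (1 - eta))%:E <= D_mu mu H)%E].

Definition cpoint := 'I_d -> R.
Definition corner (w : word d) (i : 'I_d) : R :=
  \sum_(k < size w) (nth [ffun _ => false] w k i)%:R * 2 `^ (- (k.+1)%:R).
Definition cube (w : word d) : set cpoint :=
  [set y | forall i, corner w i <= y i <= corner w i + 2 `^ (- (size w)%:R)].
Definition neighbours (w : word d) : set (word d) :=
  [set u | size u = size w /\ exists y, cube u y /\ cube w y].

(* binary digit k >= 1 of t in [0,1], lexicographically largest expansion *)
Definition bdigit (t : R) (k : nat) : bool :=
  if t == 1 then true else odd `|Num.floor (2 ^+ k * t)|%N.
Definition xprefix (x : cpoint) (j : nat) : word d :=
  mkseq (fun k => [ffun i => bdigit (x i) k.+1]) j.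

(* M_mu(I_w) = max { mu(I_{wv}) : v in Sigma^*, p_{wv} = 1 } (-oo if empty) *)
Definition Msamp (mu : word d -> R) (p : word d -> bool) (w : word d) : \bar R :=
  ereal_sup [set (mu (w ++ v))%:E | v in [set v : word d | (0 < size v)%N /\ p (w ++ v)]].
Definition Mtilde (mu : word d -> R) (p : word d -> bool) (w : word d) : \bar R :=
  ereal_sup [set Msamp mu p u | u in neighbours w].

(* log2 (M) / (-j) in the extended reals, with log2 0 = log2 (-oo) = -oo *)
Definition log_ratio (M : \bar R) (j : nat) : \bar R :=
  match M with
  | r%:E => if 0 < r then ((log2 r) / (- j%:R))%:E else +oo%E
  | +oo%E => -oo%E
  | -oo%E => +oo%E
  end.

End Potentials.

Definition mutually_independent_on {dO : measure_display} {Omega : measurableType dO}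
  {R : realType} (P : probability Omega R) {I : eqType} (D : pred I)
  (A : I -> set Omega) :=
  forall s : seq I, uniq s -> all D s ->
    P (\bigcap_(i in [set i | i \in s]) A i) = (\prod_(i <- s) P (A i))%E.

(* Main.v *)
Require Import Defs.
From HB Require Import structures.
From mathcomp Require Import all_boot all_order all_algebra.
From mathcomp Require Import all_classical all_reals all_analysis.
From mathcomp Require Import ring lra zify.
Set Implicit Arguments. Unset Strict Implicit. Unset Printing Implicit Defensive.
Import Order.TTheory GRing.Theory Num.Theory.
Import numFieldNormedType.Exports.
Local Open Scope classical_set_scope.
Local Open Scope ring_scope.
Lemma fek_iter (R : realType) (a : nat -> R) m :
  (forall m n, (0<m)%N -> (0<n)%N -> a m + a n <= a (m+n)%N) -> (0 < m)%N ->
  forall q r, (0 < r)%N -> q%:R * a m + a r <= a (q * m + r)%N.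
Proof.
move=> sup m0; elim=> [|q IH] r r0; first by rewrite mul0r add0r mul0n add0n.
rewrite mulSn -addnA (le_trans _ (sup _ _ m0 _))//; last by rewrite addn_gt0 r0 orbT.
have := IH r r0.
rewrite -(addn1 q) natrD mulrDl mul1r. lra.
Qed.
Lemma fekete (R : realType) (a : nat -> R) (B : R) :
  (forall m n, (0<m)%N -> (0<n)%N -> a m + a n <= a (m+n)%N) ->
  (forall n, (0<n)%N -> a n <= n%:R * B) ->
  let L := sup [set a n / n%:R | n in [set n | (0<n)%N]] in
  (forall n, (0<n)%N -> a n <= n%:R * L) /\ ((fun n => a n / n%:R) @ \oo --> L).
Proof.
move=> sa ub L.
have hs : has_sup [set a n / n%:R | n in [set n | (0<n)%N]].
  split; first by exists (a 1%N / 1%:R); exists 1%N.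
  exists B => _ [n n0 <-]; rewrite ler_pdivrMr ?ltr0n// mulrC; exact: ub.
have le1 n : (0 < n)%N -> a n / n%:R <= L by move=> n0; apply: sup_upper_bound => //; exists n.
split.
  by move=> n n0; have := le1 n n0; rewrite ler_pdivrMr ?ltr0n// mulrC.
apply/cvgrPdist_le => e e0.
have e20 : 0 < e / 2 by rewrite divr_gt0.
have [_ [m m0 <-] hm] := sup_adherent e20 hs.
set x := a m / m%:R.
set T := \sum_(r < m.+1) `|a r|.
set c := m%:R * `|x| + T.
have c0 : 0 <= c by rewrite addr_ge0 ?mulr_ge0// sumr_ge0.
pose N := (Num.truncn (c / (e / 2))).+1.
exists N => // n /= Nn.
have n0 : (0 < n)%N by apply: leq_trans Nn.
have nR0 : 0 < n%:R :> R by rewrite ltr0n.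
have hcn : c / n%:R <= e / 2.
  rewrite ler_pdivrMr// -ler_pdivrMl// mulrC.
  apply: ltW; apply: (lt_le_trans (Num.Theory.truncnS_gt _)).
  by rewrite ler_nat.
set q := (n.-1 %/ m)%N. set r := (n.-1 %% m).+1.
have nqr : n = (q * m + r)%N.
  rewrite /q /r addnS -divn_eq; lia.
have r0 : (0 < r)%N by [].
have rm : (r <= m)%N by rewrite /r ltn_mod.
have h1 := @fek_iter R a m sa m0 q r r0.
have hqm1 : (q * m)%:R <= n%:R :> R by rewrite ler_nat nqr leq_addr.
have hqm2 : n%:R - m%:R <= (q * m)%:R :> R.
  rewrite lerBlDr -natrD ler_nat nqr leq_add2l //.
have hqa : q%:R * a m = (q * m)%:R * x.
  by rewrite /x natrM; field; rewrite pnatr_eq0 -lt0n.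
have hy : n%:R * x - m%:R * `|x| <= (q * m)%:R * x.
  have : - ((q * m)%:R - n%:R) * x <= m%:R * `|x|.
    apply: (le_trans (ler_norm _)); rewrite normrM normrN.
    apply: ler_wpM2r => //; rewrite ler_norml; apply/andP; split; lra.
  lra.
have har : - T <= a r.
  rewrite lerNl; apply: (le_trans (ler_norm _)); rewrite normrN.
  have rlt : (r < m.+1)%N by [].
  rewrite /T (bigD1 (Ordinal rlt))//= lerDl; exact: sumr_ge0.
have lo : x - e / 2 <= a n / n%:R.
  rewrite ler_pdivlMr//.
  have : c <= n%:R * (e / 2) by move: hcn; rewrite ler_pdivrMr// mulrC.
  have han : q%:R * a m + a r <= a n by rewrite nqr.
  move=> hc; rewrite /c in hc.
  rewrite hqa in han. have : 0 <= n%:R * e by rewrite mulr_ge0 // ltW. lra.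
have hi := le1 n n0. rewrite /x in lo.
rewrite ler_norml; apply/andP; split; rewrite /L in hi *; move: hm hi lo; set S := sup _ => hm hi lo; have := e0; lra.
Qed.
Lemma iter_shift (d : nat) i (s : seqspace d) k : iter i (@Defs.shift d) s k = s (i + k)%N.
Proof.
elim: i k => [|i IH] k //=.
by rewrite /Defs.shift IH addSnnS.
Qed.

Lemma birkhoffD (R : realType) d (psi : seqspace d -> R) m n t :
  birkhoff psi (m + n) t = birkhoff psi m t + birkhoff psi n (iter m (@Defs.shift d) t).
Proof.
rewrite /birkhoff big_split_ord /=; congr (_ + _).
by apply: eq_bigr => i _; rewrite /= addnC iterD.
Qed.

Lemma cyl_point d (w : word d) : cyl w (fun k => nth [ffun _ => false] w k).
Proof. by move=> k _. Qed.

Lemma cyl_catl d (u v : word d) t : cyl (u ++ v) t -> cyl u t.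
Proof.
move=> h k ku; rewrite h ?size_cat ?nth_cat ?ku//.
by apply: leq_trans ku _; rewrite leq_addr.
Qed.

Lemma cyl_catr d (u v : word d) t : cyl (u ++ v) t -> cyl v (iter (size u) (@Defs.shift d) t).
Proof.
move=> h k kv; rewrite iter_shift h ?size_cat ?ltn_add2l// nth_cat.
by rewrite ltnNge leq_addr /= addKn.
Qed.

Lemma cyl_agree d (w : word d) s t : cyl w s -> cyl w t -> agree (size w) s t.
Proof. by move=> hs ht k kw; rewrite hs ?ht. Qed.

Lemma agree_shift d n i (s t : seqspace d) : agree n s t -> (i <= n)%N ->
  agree (n - i) (iter i (@Defs.shift d) s) (iter i (@Defs.shift d) t).
Proof.
move=> h ilen k kl; rewrite !iter_shift h//.
by rewrite -ltn_subRL.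
Qed.

Lemma geom_bound (R : realType) (r : R) : 0 <= r < 1 ->
  forall m, \sum_(i < m) r ^+ (m - i) <= r / (1 - r).
Proof.
move=> /andP[r0 r1]; have r10 : 0 < 1 - r by rewrite subr_gt0.
elim=> [|m IH]; first by rewrite big_ord0 divr_ge0 // ltW.
rewrite big_ord_recr /= subSnn expr1.
have -> : \sum_(i < m) r ^+ (m.+1 - i) = r * \sum_(i < m) r ^+ (m - i).
  rewrite mulr_sumr; apply: eq_bigr => i _.
  by rewrite subSn ?exprS // ltnW.
have h : r * \sum_(i < m) r ^+ (m - i) <= r * (r / (1 - r)) by rewrite ler_wpM2l.
apply: (le_trans (lerD h (lexx r))).
rewrite le_eqVlt; apply/orP; left; apply/eqP; field.
by rewrite subr_eq0 gt_eqF.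
Qed.
Lemma pow2E (R : realType) (x : R) : 2 `^ x = expR (x * ln 2).
Proof. by rewrite /powR pnatr_eq0. Qed.

Lemma holder_r (R : realType) (gam : R) : 0 < gam ->
  0 <= 2 `^ (- gam) < 1.
Proof.
move=> g0; rewrite powR_ge0 /= pow2E expR_lt1.
by rewrite mulNr oppr_lt0 mulr_gt0 // ln_gt0 // ltr1n.
Qed.

Lemma holder_pow (R : realType) (gam : R) n :
  2 `^ (- (gam * n%:R)) = (2 `^ (- gam)) ^+ n.
Proof. by rewrite -mulNr powRrM powR_mulrn // powR_ge0. Qed.

Lemma holder_bounded (R : realType) d (psi : seqspace d -> R) : holder psi ->
  exists B, 0 <= B /\ forall s, `|psi s| <= B.
Proof.
move=> [C [gam [C0 [g0 h]]]].
pose t0 : seqspace d := fun _ => [ffun _ => false].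
exists (`|psi t0| + C); split; first by rewrite addr_ge0 // ltW.
move=> s; have := h 0%N s t0 (fun k (hk : (k < 0)%N) => False_ind _ (notF hk)).
rewrite mulr0 oppr0 powRr0 mulr1 => hs.
have := ler_normD (psi s - psi t0) (psi t0); rewrite subrK; lra.
Qed.
Lemma holder_distortion (R : realType) d (psi : seqspace d -> R) : holder psi ->
  exists D, 0 <= D /\ forall (w : word d) s t, cyl w s -> cyl w t ->
    birkhoff psi (size w) s <= birkhoff psi (size w) t + D.
Proof.
move=> [C [gam [C0 [g0 h]]]].
set r := 2 `^ (- gam).
have hr : 0 <= r < 1 by exact: holder_r.
have r10 : 0 < 1 - r by case/andP: hr => _ ?; rewrite subr_gt0.
exists (C * (r / (1 - r))); split.
  by case/andP: hr => r0 _; apply: mulr_ge0; [exact: ltW | apply: divr_ge0 => //; exact: ltW].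
move=> w s t hs ht; set m := size w.
have ag := cyl_agree hs ht.
suff : \sum_(i < m) (psi (iter i (@Defs.shift d) s) - psi (iter i (@Defs.shift d) t))
    <= C * (r / (1 - r)).
  by rewrite sumrB /birkhoff; lra.
apply: (le_trans _ (ler_wpM2l (ltW C0) (geom_bound hr m))).
rewrite mulr_sumr; apply: ler_sum => i _.
apply: (le_trans (ler_norm _)).
rewrite -holder_pow; apply: h; apply: agree_shift => //.
exact: ltnW.
Qed.

Lemma birkhoff_bound (R : realType) d (psi : seqspace d -> R) B :
  (forall s, `|psi s| <= B) -> forall n t, `|birkhoff psi n t| <= n%:R * B.
Proof.
move=> hB n t; rewrite /birkhoff.
apply: (le_trans (ler_norm_sum _ _ _)).
have -> : n%:R * B = \sum_(i < n) B by rewrite sumr_const card_ord mulr_natl.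
by apply: ler_sum => i _; exact: hB.
Qed.
Lemma Psi_has_sup (R : realType) d (psi : seqspace d -> R) (w : word d) : holder psi ->
  has_sup [set birkhoff psi (size w) t | t in cyl w].
Proof.
move=> hh; have [B [B0 hB]] := holder_bounded hh.
split; first by exists (birkhoff psi (size w) (fun k => nth [ffun _ => false] w k)); exists (fun k => nth [ffun _ => false] w k) => //; exact: cyl_point.
exists ((size w)%:R * B) => _ [t _ <-].
exact: le_trans (ler_norm _) (birkhoff_bound hB _ _).
Qed.

Lemma Psi_ge (R : realType) d (psi : seqspace d -> R) (w : word d) t : holder psi ->
  cyl w t -> birkhoff psi (size w) t <= Psi psi w.
Proof. by move=> hh ht; apply: sup_upper_bound; [exact: Psi_has_sup|exists t]. Qed.

Lemma Psi_le (R : realType) d (psi : seqspace d -> R) : holder psi ->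
  exists D, 0 <= D /\ forall (w : word d) t, cyl w t ->
    Psi psi w <= birkhoff psi (size w) t + D.
Proof.
move=> hh; have [D [D0 hD]] := holder_distortion hh.
exists D; split => // w t ht.
apply: ge_sup; first by exists (birkhoff psi (size w) t); exists t.
by move=> _ [s hs <-]; exact: hD.
Qed.

Lemma Psi_super (R : realType) d (psi : seqspace d -> R) : holder psi ->
  exists D, 0 <= D /\ forall (u v : word d), Psi psi u + Psi psi v <= Psi psi (u ++ v) + D.
Proof.
move=> hh; have [D [D0 hD]] := Psi_le hh.
exists (D + D); split; first by rewrite addr_ge0.
move=> u v; pose t : seqspace d := fun k => nth [ffun _ => false] (u ++ v) k.
have ht : cyl (u ++ v) t by exact: cyl_point.
have h1 := hD u t (cyl_catl ht).
have h2 := hD v _ (cyl_catr ht).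
have h3 := Psi_ge hh ht.
rewrite size_cat birkhoffD in h3.
lra.
Qed.
Lemma cyl_measurable d (w : word d) : measurable (cyl w : set (Sigma d)).
Proof. by apply: sub_sigma_algebra; exists w. Qed.

Lemma nu_fin (R : realType) d (nu : probability (Sigma d) R) (w : word d) :
  nu (cyl w) \is a fin_num.
Proof. exact: (fin_num_measure nu _ (cyl_measurable w)). Qed.

Lemma nn_bounds (R : realType) d (nu : probability (Sigma d) R) (w : word d) :
  0 <= fine (nu (cyl w)) <= 1.
Proof.
have h1 := probability_le1 nu (cyl_measurable w).
have h0 := measure_ge0 nu (cyl w).
rewrite fine_ge0 //=.
have := @fine_le R _ 1%E (nu_fin nu w) erefl h1. by [].
Qed.
Lemma nn_pos (R : realType) d (psi : seqspace d -> R) (nu : probability (Sigma d) R) :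
  gibbs psi nu -> forall w : word d, (0 < size w)%N -> 0 < fine (nu (cyl w)).
Proof.
move=> [C [C0 h]] w w0; have [h1 _] := h w w0.
by apply: lt_le_trans h1; rewrite mulr_gt0 ?invr_gt0 ?expR_gt0.
Qed.

Lemma nn_quasi (R : realType) d (psi : seqspace d -> R) (nu : probability (Sigma d) R) :
  holder psi -> gibbs psi nu -> exists c, 0 < c /\ forall u v : word d,
    (0 < size u)%N -> (0 < size v)%N ->
    c * fine (nu (cyl u)) * fine (nu (cyl v)) <= fine (nu (cyl (u ++ v))).
Proof.
move=> hh [C [C0 h]]; have [D [D0 hD]] := Psi_super hh.
set P := pressure psi.
exists ((C ^+ 3)^-1 * expR (- D)); split; first by rewrite mulr_gt0 ?invr_gt0 ?exprn_gt0 ?expR_gt0.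
move=> u v u0 v0.
have uv0 : (0 < size (u ++ v))%N by rewrite size_cat addn_gt0 u0.
have [_ hu] := h u u0; have [_ hv] := h v v0; have [huv _] := h _ uv0.
have hD' := hD u v.
set Gu := expR (Psi psi u - (size u)%:R * P) in hu *.
set Gv := expR (Psi psi v - (size v)%:R * P) in hv *.
have hG : expR (- D) * Gu * Gv <= expR (Psi psi (u ++ v) - (size (u ++ v))%:R * P).
  rewrite /Gu /Gv -!expRD ler_expR size_cat natrD; lra.
have nu0 := nn_pos (ex_intro _ C (conj C0 h)) u0.
have nv0 := nn_pos (ex_intro _ C (conj C0 h)) v0.
set a := fine (nu (cyl u)) in hu nu0 *. set b := fine (nu (cyl v)) in hv nv0 *.
set x := fine (nu (cyl (u ++ v))) in huv *.
apply: (le_trans _ huv).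
have hab : a * b <= (C * Gu) * (C * Gv) by apply: ler_pM => //; exact: ltW.
have eD : 0 < expR (- D) by exact: expR_gt0.
have C3 : C ^+ 3 = C * C * C by rewrite !exprS expr0 mulr1 mulrA.
rewrite C3 -(mulrA _ a b).
have Cg0 : 0 <= (C * C * C)^-1 * expR (- D) by rewrite mulr_ge0 ?invr_ge0 ?mulr_ge0 ?expR_ge0 // ltW.
apply: (le_trans (ler_wpM2l Cg0 hab)).
have -> : (C * C * C)^-1 * expR (- D) * (C * Gu * (C * Gv)) = C^-1 * (expR (- D) * Gu * Gv).
  by field; rewrite lt0r_neq0.
by apply: ler_wpM2l => //; rewrite invr_ge0 ltW.
Qed.
Lemma mu_ge0 (R : realType) d (nu : probability (Sigma d) R) (K alpha beta : R) (w : word d) :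
  0 <= K -> 0 <= gibbs_cap K alpha beta nu w.
Proof. by move=> K0; rewrite /gibbs_cap !mulr_ge0 ?powR_ge0 ?expR_ge0. Qed.

Lemma mu_pos (R : realType) d (psi : seqspace d -> R) (nu : probability (Sigma d) R) (K alpha beta : R) (w : word d) :
  gibbs psi nu -> 0 < K -> (0 < size w)%N -> 0 < gibbs_cap K alpha beta nu w.
Proof.
move=> hg K0 w0; rewrite /gibbs_cap !mulr_gt0 ?powR_gt0 ?expR_gt0 //.
exact: (@nn_pos R d psi nu hg w w0).
Qed.

Lemma mu_leK (R : realType) d (nu : probability (Sigma d) R) (K alpha beta : R) (w : word d) :
  0 <= K -> 0 <= alpha -> 0 <= beta -> gibbs_cap K alpha beta nu w <= K.
Proof.
move=> K0 a0 b0; rewrite /gibbs_cap -[X in _ <= X]mulr1 -mulrA ler_wpM2l //.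
have /andP[n0 n1] := nn_bounds nu w.
have h1 : fine (nu (cyl w)) `^ alpha <= 1.
  have -> : (1:R) = 1 `^ alpha by rewrite powR1.
  apply: ge0_ler_powR => //; rewrite nnegrE //.
have h2 : expR (- (beta * (size w)%:R)) <= 1 by rewrite expR_le1 oppr_le0 mulr_ge0.
by apply: le_trans (ler_pM (powR_ge0 _ _) (expR_ge0 _) h1 h2) _; rewrite mulr1.
Qed.

Lemma mu_quasi (R : realType) d (psi : seqspace d -> R) (nu : probability (Sigma d) R) (K alpha beta : R) :
  holder psi -> gibbs psi nu -> 0 < K -> 0 <= alpha ->
  exists c, 0 < c /\ forall u v : word d, (0 < size u)%N -> (0 < size v)%N ->
    c * gibbs_cap K alpha beta nu u * gibbs_cap K alpha beta nu v
      <= gibbs_cap K alpha beta nu (u ++ v).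
Proof.
move=> hh hg K0 a0; have [c [c0 hc]] := nn_quasi hh hg.
exists (c `^ alpha / K); split; first by rewrite divr_gt0 ?powR_gt0.
move=> u v u0 v0; rewrite /gibbs_cap size_cat natrD.
have /andP[nu0 _] := nn_bounds nu u.
have /andP[nv0 _] := nn_bounds nu v.
have hp : (c * fine (nu (cyl u)) * fine (nu (cyl v))) `^ alpha <= fine (nu (cyl (u ++ v))) `^ alpha.
  have hcuv := hc _ _ u0 v0.
  have g0 : 0 <= c * fine (nu (cyl u)) * fine (nu (cyl v)) by rewrite !mulr_ge0 // ltW.
  apply: ge0_ler_powR => //; rewrite ?nnegrE //; exact: le_trans hcuv.
have hcm : (c * fine (nu (cyl u)) * fine (nu (cyl v))) `^ alpha =
    c `^ alpha * fine (nu (cyl u)) `^ alpha * fine (nu (cyl v)) `^ alpha.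
  have c0' : 0 <= c by exact: ltW.
  by rewrite powRM ?mulr_ge0 // powRM.
rewrite hcm in hp.
set A := fine (nu (cyl u)) `^ alpha in hp *.
set B := fine (nu (cyl v)) `^ alpha in hp *.
set X := fine (nu (cyl (u ++ v))) `^ alpha in hp *.
set cc := c `^ alpha in hp *.
have -> : expR (- (beta * ((size u)%:R + (size v)%:R))) =
   expR (- (beta * (size u)%:R)) * expR (- (beta * (size v)%:R)) by rewrite -expRD; congr expR; ring.
set eu := expR (- (beta * (size u)%:R)). set ev := expR (- (beta * (size v)%:R)).
have -> : cc / K * (K * A * eu) * (K * B * ev) = K * (cc * A * B) * (eu * ev).
  field. exact: lt0r_neq0.
by apply: ler_wpM2r; rewrite ?mulr_ge0 ?expR_ge0 //; apply: ler_wpM2l => //; exact: ltW.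
Qed.
Lemma sum_tuple_cat (R : realType) (T : finType) m n (F : seq T -> R) :
  \sum_(w : (m + n).-tuple T) F w = \sum_(u : m.-tuple T) \sum_(v : n.-tuple T) F (u ++ v).
Proof.
rewrite pair_bigA /=.
rewrite (reindex (fun p : m.-tuple T * n.-tuple T => cat_tuple p.1 p.2)) //=.
exists (fun w => ([tuple tnth w (lshift n i) | i < m], [tuple tnth w (rshift m i) | i < n])).
- move=> [u v] _ /=; congr pair; apply: eq_from_tnth => i.
    by rewrite tnth_mktuple tnth_lshift.
  by rewrite tnth_mktuple tnth_rshift.
- move=> w _; apply: eq_from_tnth => i; rewrite -(fintype.splitK i).
  case: (fintype.split i) => j /=.
    by rewrite tnth_lshift tnth_mktuple.
  by rewrite tnth_rshift tnth_mktuple.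
Qed.
Lemma cvg_const_div (R : realType) (x : R) : (fun n : nat => x / n%:R) @ \oo --> 0.
Proof.
apply/cvgrPdist_le => e e0.
exists (Num.truncn (`|x| / e)).+1 => // n /= Nn.
have n0 : (0 < n)%N by apply: leq_trans Nn.
have nR0 : 0 < n%:R :> R by rewrite ltr0n.
rewrite sub0r normrN normrM normfV normr_nat ler_pdivrMr //.
rewrite mulrC -ler_pdivrMr //; apply: ltW; apply: (lt_le_trans (Num.Theory.truncnS_gt _)).
by rewrite ler_nat.
Qed.

Definition Ssum (R : realType) d (mu : word d -> R) (q : R) (J : nat) : R :=
  \sum_(w : J.-tuple (letter d)) (mu (tval w)) `^ q.

Lemma Ssum_super (R : realType) d (mu : word d -> R) (q c : R) :
  0 < q -> 0 < c -> (forall w : word d, (0 < size w)%N -> 0 < mu w) ->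
  (forall u v : word d, (0 < size u)%N -> (0 < size v)%N -> c * mu u * mu v <= mu (u ++ v)) ->
  forall m n, (0 < m)%N -> (0 < n)%N ->
    c `^ q * Ssum mu q m * Ssum mu q n <= Ssum mu q (m + n).
Proof.
move=> q0 c0 mpos hq m n m0 n0.
rewrite /Ssum (@sum_tuple_cat R (letter d) m n (fun w => mu w `^ q)).
rewrite -mulrA mulr_suml mulr_sumr; apply: ler_sum => u _.
rewrite mulr_sumr mulr_sumr; apply: ler_sum => v _.
have hu : (0 < size (tval u))%N by rewrite size_tuple.
have hv : (0 < size (tval v))%N by rewrite size_tuple.
have := hq _ _ hu hv => h.
have -> : c `^ q * (mu u `^ q * mu v `^ q) = (c * mu u * mu v) `^ q.
  by rewrite !powRM ?mulr_ge0 ?ltW ?mpos // mulrA.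
have g1 : 0 <= c * mu u * mu v.
  by rewrite !mulr_ge0 // ltW // mpos.
apply: ge0_ler_powR => //; [exact: ltW | by rewrite nnegrE (le_trans g1 h)].
Qed.
Lemma Ssum_pos (R : realType) d (mu : word d -> R) (q : R) n :
  (forall w : word d, (0 < size w)%N -> 0 < mu w) -> (0 < n)%N -> 0 < Ssum mu q n.
Proof.
move=> mpos n0; pose w0 := [tuple of nseq n ([ffun _ => false] : letter d)].
rewrite /Ssum (bigD1 w0) //=.
have hw : 0 < mu w0 `^ q by rewrite powR_gt0 // mpos // size_tuple.
apply: (lt_le_trans hw); rewrite lerDl; apply: sumr_ge0 => ? _; exact: powR_ge0.
Qed.

Lemma Ssum_ub (R : realType) d (mu : word d -> R) (q K : R) n :
  0 <= q -> (forall w, 0 <= mu w) -> (forall w, mu w <= K) ->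
  Ssum mu q n <= (#|{: letter d}| ^ n)%:R * K `^ q.
Proof.
move=> q0 m0 mK; rewrite /Ssum.
have h : forall w : n.-tuple (letter d), mu w `^ q <= K `^ q.
  move=> w; apply: ge0_ler_powR => //; rewrite nnegrE //; exact: le_trans (m0 w) (mK w).
apply: (le_trans (ler_sum _ (fun w _ => h w))).
by rewrite sumr_const card_tuple mulr_natl.
Qed.
Lemma tau_bound (R : realType) d (mu : word d -> R) (q c K : R) :
  0 < q -> 0 < c -> 0 < K -> (forall w : word d, (0 < size w)%N -> 0 < mu w) ->
  (forall w, 0 <= mu w) -> (forall w, mu w <= K) ->
  (forall u v : word d, (0 < size u)%N -> (0 < size v)%N -> c * mu u * mu v <= mu (u ++ v)) ->
  exists C0, 0 < C0 /\ forall n, (0 < n)%N ->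
    Ssum mu q n <= C0 * 2 `^ (- (n%:R * tau_mu mu q)).
Proof.
move=> q0 c0 K0 mpos m0 mK hq.
set k := c `^ q.
have k0 : 0 < k by rewrite powR_gt0.
have Spos n : (0 < n)%N -> 0 < Ssum mu q n by move=> n0; exact: Ssum_pos.
pose a n := ln (k * Ssum mu q n).
have sa : forall m n, (0<m)%N -> (0<n)%N -> a m + a n <= a (m+n)%N.
  move=> m n m0' n0'; rewrite /a -lnM ?posrE ?mulr_gt0 ?Spos //.
  rewrite ler_ln ?posrE ?mulr_gt0 ?Spos // ?addn_gt0 ?m0' //.
  have := Ssum_super q0 c0 mpos hq m0' n0'; rewrite -/k => h.
  have -> : k * Ssum mu q m * (k * Ssum mu q n) = k * (k * Ssum mu q m * Ssum mu q n) by ring.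
  by rewrite ler_pM2l.
set N0 := #|{: letter d}|.
have N00 : (0 < N0)%N by apply/card_gt0P; exists [ffun _ => false].
have lnN0 : 0 <= ln (N0%:R : R) by rewrite ln_ge0 // ler1n.
set B := `|ln (k * K `^ q)| + ln (N0%:R : R).
have ub : forall n, (0<n)%N -> a n <= n%:R * B.
  move=> n n0; rewrite /a.
  have h := Ssum_ub n (ltW q0) m0 mK.
  have hp : 0 < (N0 ^ n)%:R * K `^ q :> R by rewrite mulr_gt0 ?powR_gt0 // ltr0n expn_gt0 N00.
  apply: (@le_trans _ _ (ln (k * ((N0 ^ n)%:R * K `^ q)))).
    by rewrite ler_ln ?posrE ?(mulr_gt0 k0 hp) ?mulr_gt0 ?Spos //; apply: ler_wpM2l => //; exact: ltW.
  rewrite mulrCA lnM ?posrE ?mulr_gt0 ?powR_gt0 ?ltr0n ?expn_gt0 ?N00 //.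
  have -> : ln ((N0 ^ n)%:R : R) = n%:R * ln (N0%:R : R).
    by rewrite natrX lnXn ?ltr0n // mulr_natl.
  have h1 : ln (k * K `^ q) <= `|ln (k * K `^ q)| by exact: ler_norm.
  have h2 : 1 <= n%:R :> R by rewrite ler1n.
  have h3 := normr_ge0 (ln (k * K `^ q)).
  have h4 : `|ln (k * K `^ q)| <= n%:R * `|ln (k * K `^ q)| by rewrite ler_peMl.
  rewrite /B mulrDr. lra.
have [hle hcv] := fekete sa ub.
set L := sup _ in hle hcv.
have ln2 : 0 < ln (2:R) by rewrite ln_gt0 // ltr1n.
set kk := ln k.
have feq : (fun j : nat => - (j%:R^-1 * log2 (Ssum mu q j))) =
    (fun j => (- (a j / j%:R) + kk / j%:R) / ln 2).
  apply/funext => j; case: j => [|j].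
    by rewrite invr0 mul0r oppr0 !mulr0 oppr0 addr0 mul0r.
  rewrite /a lnM ?posrE ?Spos // /log2 -/kk; field.
  by rewrite lt0r_neq0 //= -natr1 addrC -natrS pnatr_eq0.
have hcv2 : (fun j => (- (a j / j%:R) + kk / j%:R) / ln 2) @ \oo --> (- L + 0) / ln 2.
  apply: cvgMr_tmp; apply: cvgD; [exact: cvgN | exact: cvg_const_div].
have htau : tau_mu mu q = - L / ln 2.
  by rewrite /tau_mu feq (cvg_lim _ hcv2) // addr0.
exists (k^-1); split; first by rewrite invr_gt0.
move=> n n0; rewrite htau pow2E.
have -> : - (n%:R * (- L / ln 2)) * ln 2 = n%:R * L by field; rewrite lt0r_neq0.
have ea : expR (a n) = k * Ssum mu q n by rewrite /a lnK // posrE mulr_gt0 ?Spos.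
have : expR (a n) <= expR (n%:R * L) by rewrite ler_expR hle.
rewrite ea => h.
rewrite -(ler_pM2l k0) mulrA mulfV ?mul1r //; exact: lt0r_neq0.
Qed.
Lemma Mtilde_le (R : realType) d (mu : word d -> R) (p : word d -> bool) (w : word d) (b : R) :
  (forall u v : word d, size u = size w -> (0 < size v)%N -> p (u ++ v) -> mu (u ++ v) <= b) ->
  (Mtilde mu p w <= b%:E)%E.
Proof.
move=> h; apply: ge_ereal_sup => _ [u [hu _] <-].
apply: ge_ereal_sup => _ [v [v0 pv] <-].
by rewrite lee_fin; exact: h.
Qed.

Lemma log_ratio_ge (R : realType) (M : \bar R) (j : nat) (h : R) :
  (0 < j)%N -> (M <= (2 `^ (- (j%:R * h)))%:E)%E -> (h%:E <= @log_ratio R M j)%E.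
Proof.
move=> j0; case: M => [r| |] //= hr; last by rewrite leey.
case: ifPn => r0; last by rewrite leey.
rewrite lee_fin in hr; rewrite lee_fin.
have jR : 0 < j%:R :> R by rewrite ltr0n.
have ln2 : 0 < ln (2:R) by rewrite ln_gt0 // ltr1n.
rewrite /log2 ler_ndivlMr ?oppr_lt0 //.
have : ln r <= ln (2 `^ (- (j%:R * h))) by rewrite ler_ln ?posrE ?powR_gt0.
rewrite ln_powR => hl.
rewrite ler_pdivrMr //. have -> : (1 *- j : R) = - j%:R by []. lra.
Qed.
Lemma liminf_ge (R : realType) (u : nat -> \bar R) (H : R) :
  (forall n : nat, exists k, forall j, (k <= j)%N -> ((H - (n.+1)%:R^-1)%:E <= u j)%E) ->
  (H%:E <= limn_einf u)%E.
Proof.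
move=> hu; rewrite limn_einf_lim (cvg_lim _ (@cvg_einfs_sup R u)) //.
apply/lee_subgt0Pr => e e0.
pose n := Num.truncn (e^-1).
have hn : (n.+1)%:R^-1 <= e.
  rewrite -[e]invrK lef_pV2 ?posrE ?ltr0n ?invr_gt0 //.
  exact/ltW/Num.Theory.truncnS_gt.
have [k hk] := hu n.
apply: (le_trans _ (ereal_sup_ubound (ex_intro2 _ _ k I erefl))).
apply: le_ereal_inf_tmp => _ [j /= kj <-].
apply: le_trans (hk j kj); by rewrite -EFinB lee_fin lerD2l lerN2.
Qed.
Lemma Hell_q (R : realType) d (mu : word d -> R) (eta h : R) :
  0 <= h -> h < H_ell mu eta ->
  exists q, 0 < q /\ q * h - tau_mu mu q < d%:R * (1 - eta).
Proof.
move=> h0 hlt.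
set S := [set H : R | 0 <= H /\ ((d%:R * (1 - eta))%:E <= D_mu mu H)%E].
have hS : H_ell mu eta = inf S by [].
rewrite hS in hlt.
case: (pselect (S !=set0)) => [[H1 hH1] | nS]; last first.
  have S0 : S = set0 by apply/seteqP; split => x // hx; exfalso; apply: nS; exists x.
  by move: hlt; rewrite S0 inf0; lra.
have lb : has_lbound S by exists 0 => x [].
have hH1' : inf S <= H1 := ge_inf lb hH1.
have hnot : ~ S h by move=> Sh; have := ge_inf lb Sh; lra.
have hlt2 : (D_mu mu h < (d%:R * (1 - eta))%:E)%E.
  by rewrite ltNge; apply/negP => hle; apply: hnot; split.
have [_ [q _ <-] hq] := ereal_inf_lt hlt2.
exists q; split; last by rewrite -lte_fin.
rewrite ltNge; apply/negP => q0.
case: hH1 => _ hD.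
have hD1 : (D_mu mu H1 <= (q * H1 - tau_mu mu q)%:E)%E by apply: ereal_inf_lbound; exists q.
have hqq : q * H1 <= q * h by rewrite ler_wnM2l //; lra.
have := le_trans hD hD1; rewrite lee_fin.
move: hq; rewrite lte_fin; lra.
Qed.
Lemma measure_bigU_le (dO : measure_display) (Omega : measurableType dO) (R : realType)
  (P : probability Omega R) (I : Type) (r : seq I) (Q : pred I) (F : I -> set Omega) :
  (forall i, measurable (F i)) ->
  (P (\big[setU/set0]_(i <- r | Q i) F i) <= \sum_(i <- r | Q i) P (F i))%E.
Proof.
move=> mF; elim: r => [|i r IH]; first by rewrite !big_nil measure0.
rewrite !big_cons; case: (Q i) => //.
apply: (le_trans (measureU2 P (mF i) (bigsetU_measurable _ _))) => [j _|]; first exact: mF.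
exact: leeD2l.
Qed.

Lemma geom_sum_le (R : realType) (r : R) : 0 <= r < 1 ->
  forall m, \sum_(i < m) r ^+ i <= (1 - r)^-1.
Proof.
move=> /andP[r0 r1]; have r10 : 0 < 1 - r by rewrite subr_gt0.
elim=> [|m IH]; first by rewrite big_ord0 invr_ge0 ltW.
rewrite big_ord_recl expr0.
have -> : \sum_(i < m) r ^+ (bump 0 i) = r * \sum_(i < m) r ^+ i.
  by rewrite mulr_sumr; apply: eq_bigr => i _; rewrite exprS.
have h : r * \sum_(i < m) r ^+ i <= r * (1 - r)^-1 by rewrite ler_wpM2l.
apply: (le_trans (lerD (lexx 1) h)).
rewrite le_eqVlt; apply/orP; left; apply/eqP; field.
by rewrite subr_eq0 gt_eqF.
Qed.

Lemma geom_partial (R : realType) (r : R) : 0 <= r < 1 ->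
  forall k n, \sum_(k <= J < n) r ^+ J <= r ^+ k / (1 - r).
Proof.
move=> hr k n; have /andP[r0 r1] := hr.
rewrite -{1}[k]add0n big_addn big_mkord.
under eq_bigr do rewrite exprD.
rewrite -mulr_suml mulrC ler_wpM2l ?exprn_ge0 //.
exact: geom_sum_le.
Qed.
Lemma tail_bound (dO : measure_display) (Omega : measurableType dO) (R : realType)
  (P : probability Omega R) (A : nat -> set Omega) (C0 r : R) k :
  (forall J, measurable (A J)) -> 0 <= C0 -> 0 <= r < 1 ->
  (forall J, (P (A J) <= (C0 * r ^+ J)%:E)%E) ->
  (P (\bigcup_(J in [set J | (k <= J)%N]) A J) <= (C0 * (r ^+ k / (1 - r)))%:E)%E.
Proof.
move=> mA hC0 hr hA.
have mU : measurable (\bigcup_(J in [set J | (k <= J)%N]) A J).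
  by apply: bigcup_measurable => J _; exact: mA.
have sub : \bigcup_(J in [set J | (k <= J)%N]) A J `<=` \bigcup_(n in ~` `I_k) A n.
  move=> om [J kJ AJ]; exists J => //=; apply/negP; rewrite -leqNgt; exact: kJ.
apply: (le_trans (measure_sigma_subadditive_tail P mA mU sub)).
apply: lime_le; first by apply: is_cvg_nneseries => n _ _; exact: measure_ge0.
apply: nearW => n.
apply: (@le_trans _ _ (\sum_(k <= J < n) (C0 * r ^+ J)%:E)%E); first by apply: lee_sum => J _; exact: hA.
rewrite sumEFin lee_fin -mulr_sumr ler_wpM2l //.
exact: geom_partial.
Qed.
Lemma mem_bigU (T : Type) (I : finType) (Q : pred I) (F : I -> set T) i x :
  Q i -> F i x -> (\big[setU/set0]_(j | Q j) F j) x.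
Proof. by move=> Qi Fx; rewrite (bigD1 i) //=; left. Qed.

Lemma level_bound (R : realType) d (mu : word d -> R) (h q C0 tau dd : R) J :
  (forall w : word d, (0 < size w)%N -> 0 < mu w) -> 0 < q ->
  (forall n, (0 < n)%N -> Ssum mu q n <= C0 * 2 `^ (- (n%:R * tau))) ->
  \sum_(w : (J.+1).-tuple (letter d) | 2 `^ (- ((J.+1)%:R * h)) < mu w)
      2 `^ (- (dd * (J.+1)%:R))
    <= C0 * (2 `^ (q * h - tau - dd)) ^+ J.+1.
Proof.
move=> mpos q0 hS.
set T := 2 `^ (- ((J.+1)%:R * h)).
set t := 2 `^ (- (dd * (J.+1)%:R)).
have T0 : 0 < T by rewrite powR_gt0.
have t0 : 0 < t by rewrite powR_gt0.
have Tq0 : 0 < T `^ q by rewrite powR_gt0.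
apply: (@le_trans _ _ (\sum_(w : (J.+1).-tuple (letter d)) (mu w `^ q / T `^ q) * t)).
  rewrite big_mkcond /=; apply: ler_sum => w _; case: ifPn => hw.
    have h1 : T `^ q <= mu w `^ q.
      by apply: ge0_ler_powR; rewrite ?nnegrE; [exact: ltW|exact: ltW|apply: ltW; apply: mpos; rewrite size_tuple|exact: ltW].
    have h2 : 1 <= mu w `^ q / T `^ q by rewrite ler_pdivlMr // mul1r.
    by apply: ler_peMl => //; exact: ltW.
  by rewrite mulr_ge0 ?divr_ge0 ?powR_ge0 // ltW.
rewrite -mulr_suml -mulr_suml -/(Ssum mu q J.+1).
apply: (@le_trans _ _ (C0 * 2 `^ (- ((J.+1)%:R * tau)) / T `^ q * t)).
  apply: ler_wpM2r; first exact: ltW.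
  apply: ler_wpM2r; first by rewrite invr_ge0 ltW.
  exact: hS.
have -> : T `^ q = 2 `^ (- ((J.+1)%:R * h) * q) by rewrite /T powRrM.
rewrite /t -powR_mulrn ?powR_ge0 // -powRrM !pow2E -mulrA -mulrA.
rewrite -expRN -!expRD.
suff -> : (- ((J.+1)%:R * tau) * ln 2 + (- (- ((J.+1)%:R * h) * q * ln 2) + - (dd * (J.+1)%:R) * ln 2)) = (q * h - tau - dd) * (J.+1)%:R * ln 2 by [].
ring.
Qed.
Lemma null_set (dO : measure_display) (Omega : measurableType dO) (R : realType)
  (P : probability Omega R) d (p : word d -> Omega -> bool) (mu : word d -> R)
  (h q C0 tau dd : R) :
  (forall w, measurable [set om | p w om]) ->
  (forall w : word d, (0 < size w)%N ->
     P [set om | p w om] = (2 `^ (- (dd * (size w)%:R)))%:E) ->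
  (forall w : word d, (0 < size w)%N -> 0 < mu w) ->
  0 < q -> 0 < C0 ->
  (forall n, (0 < n)%N -> Ssum mu q n <= C0 * 2 `^ (- (n%:R * tau))) ->
  q * h - tau < dd ->
  exists Z : set Omega, measurable Z /\ P Z = 0%E /\
    forall om, ~ Z om -> exists k, forall w : word d, (k < size w)%N -> p w om ->
      mu w <= 2 `^ (- ((size w)%:R * h)).
Proof.
move=> hmeas hprob mpos q0 C00 hS hqd.
pose T J : R := 2 `^ (- ((J.+1)%:R * h)).
pose A J := \big[setU/set0]_(w : (J.+1).-tuple (letter d) | T J < mu w) [set om | p w om].
pose G k := \bigcup_(J in [set J | (k <= J)%N]) A J.
have mA J : measurable (A J) by apply: bigsetU_measurable => w _; exact: hmeas.
set rho := 2 `^ (q * h - tau - dd).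
have hrho : 0 <= rho < 1.
  rewrite powR_ge0 /= /rho pow2E expR_lt1 pmulr_llt0 ?ln_gt0 ?ltr1n //; lra.
have hA J : (P (A J) <= (C0 * rho ^+ J)%:E)%E.
  have hU := @measure_bigU_le dO Omega R P _ (index_enum ((J.+1).-tuple (letter d))) (fun w : (J.+1).-tuple (letter d) => T J < mu (tval w)) (fun w : (J.+1).-tuple (letter d) => [set om | p (tval w) om]) (fun w => hmeas (tval w)).
  apply: (le_trans hU).
  rewrite (eq_bigr (fun _ => (2 `^ (- (dd * (J.+1)%:R)))%:E)); last first.
    by move=> w _; rewrite hprob size_tuple.
  rewrite sumEFin lee_fin.
  apply: (le_trans (level_bound h dd J mpos q0 hS)).
  case/andP: hrho => r0 r1.
  apply: ler_wpM2l; first exact: ltW.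
  rewrite exprS; apply: ler_piMl; [exact: exprn_ge0 | exact: ltW].
exists (\bigcap_k G k); split.
  by apply: bigcapT_measurable => k; apply: bigcup_measurable => J _; exact: mA.
split.
  apply/eqP; rewrite eq_le measure_ge0 andbT.
  apply/lee_addgt0Pr => e e0; rewrite add0e.
  case/andP: hrho => r0 r1.
  have r10 : 0 < 1 - rho by rewrite subr_gt0.
  have nr : `|rho| < 1 by rewrite ger0_norm.
  have hcv := @cvg_expr R rho nr.
  have ee0 : 0 < e * (1 - rho) / C0 by rewrite divr_gt0 // mulr_gt0.
  have [N _ hN] := (cvgrPdist_lt _ _).1 hcv _ ee0.
  have hNN := hN N (leqnn N).
  rewrite /= sub0r normrN ger0_norm ?exprn_ge0 // in hNN.
  have mG : measurable (G N) by apply: bigcup_measurable => J _; exact: mA.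
  have mZ : measurable (\bigcap_k G k).
    by apply: bigcapT_measurable => k; apply: bigcup_measurable => J _; exact: mA.
  have sub : \bigcap_k G k `<=` G N by move=> om hom; exact: hom N I.
  apply: (le_trans (le_measure P _ _ sub)); rewrite ?inE //.
  apply: (le_trans (@tail_bound dO Omega R P A C0 rho N mA (ltW C00) (introT andP (conj r0 r1)) hA)).
  rewrite lee_fin.
  rewrite ltr_pdivlMr // in hNN.
  rewrite mulrA ler_pdivrMr //.
  by rewrite mulrC; apply: ltW.
move=> om nZ.
have [k nk] : exists k, ~ G k om.
  by apply/existsNP => hall; apply: nZ => k _; exact: hall k.
exists k => w kw pw.
rewrite leNgt; apply/negP => hlt; apply: nk.
have sp : ((size w).-1).+1 = size w by rewrite prednK // (leq_ltn_trans _ kw).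
have szw : size w == ((size w).-1).+1 by rewrite sp.
exists (size w).-1; first by rewrite /= -ltnS sp.
apply: (@mem_bigU _ _ _ _ (Tuple szw)) => //=.
by rewrite /T sp.
Qed.
Lemma good_level (R : realType) (d : nat)
  (psi : seqspace d -> R) (nu : probability (Sigma d) R) (K alpha beta : R)
  (hpsi : holder psi) (hnu : gibbs psi nu)
  (hK : 0 < K) (halpha : 0 < alpha) (hbeta : 0 <= beta)
  (eta : R)
  (dO : measure_display) (Omega : measurableType dO) (P : probability Omega R)
  (p : word d -> Omega -> bool)
  (hmeas : forall w : word d, measurable [set om | p w om])
  (hprob : forall w : word d, (0 < size w)%N ->
     P [set om | p w om] = (2 `^ (- (d%:R * (1 - eta) * (size w)%:R)))%:E) (h : R) :
  h < H_ell (gibbs_cap K alpha beta nu) eta ->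
  exists Z : set Omega, measurable Z /\ P Z = 0%E /\ forall om, ~ Z om ->
    exists k, forall j, (k <= j)%N -> forall w : word d, size w = j ->
      (Mtilde (gibbs_cap K alpha beta nu) (fun w => p w om) w <= (2 `^ (- (j%:R * h)))%:E)%E.
Proof.
move=> hlt; set mu := gibbs_cap K alpha beta nu.
have mpos : forall w : word d, (0 < size w)%N -> 0 < mu w.
  by move=> w w0; exact: (mu_pos alpha beta hnu hK w0).
have mK : forall w, mu w <= K by move=> w; apply: mu_leK; [exact: ltW|exact: ltW|exact: hbeta].
have m0 : forall w, 0 <= mu w by move=> w; apply: mu_ge0; exact: ltW.
have ln2 : 0 < ln (2:R) by rewrite ln_gt0 // ltr1n.
case: (ltP h 0) => h0.
  exists set0; split; first exact: measurable0.
  split; first exact: measure0.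
  move=> om _.
  have hh : 0 < - h * ln 2 by rewrite mulr_gt0 // oppr_gt0.
  exists (Num.truncn (K / (- h * ln 2))).+1 => j kj w _.
  apply: Mtilde_le => u v _ _ _; apply: (le_trans (mK _)).
  rewrite pow2E; apply: (le_trans _ (expR_ge1Dx _)).
  have : K / (- h * ln 2) < j%:R.
    apply: (lt_le_trans (Num.Theory.truncnS_gt _)); by rewrite ler_nat.
  rewrite ltr_pdivrMr // => hj.
  have : 0 <= 1 by []. nra.
have [q [q0 hq]] := Hell_q h0 hlt.
have [c [c0 hc]] := mu_quasi beta hpsi hnu hK (ltW halpha).
have [C0 [C00 hS]] := tau_bound q0 c0 hK mpos m0 mK hc.
have [Z [mZ [PZ hZ]]] := null_set (P:=P) hmeas hprob mpos q0 C00 hS hq.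
exists Z; split => //; split => // om nZ.
have [k hk] := hZ om nZ.
exists k => j kj w sw.
apply: Mtilde_le => u v su v0 puv.
have hsz : (k < size (u ++ v))%N by rewrite size_cat su; lia.
apply: (le_trans (hk _ hsz puv)).
apply: ler_powR; first by rewrite ler1n.
rewrite lerN2; apply: ler_wpM2r => //; rewrite ler_nat size_cat su; lia.
Qed.
Unset Implicit Arguments.
Theorem lemma4 (R : realType) (d : nat) (hd : (0 < d)%N)
  (psi : seqspace d -> R) (nu : probability (Sigma d) R) (K alpha beta : R)
  (hpsi : holder psi) (hnu : gibbs psi nu)
  (hK : 0 < K) (halpha : 0 < alpha) (hbeta : 0 <= beta)
  (hnonhom : ~ cohomologous_to_const psi)
  (eta : R) (heta : 0 < eta < 1)
  (dO : measure_display) (Omega : measurableType dO) (P : probability Omega R)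
  (p : word d -> Omega -> bool)
  (hmeas : forall w : word d, measurable [set om | p w om])
  (hind : mutually_independent_on P (fun w : word d => (0 < size w)%N)
            (fun w => [set om | p w om]))
  (hprob : forall w : word d, (0 < size w)%N ->
     P [set om | p w om] = (2 `^ (- (d%:R * (1 - eta) * (size w)%:R)))%:E) :
  let mu := gibbs_cap K alpha beta nu in
  exists E : set Omega, measurable E /\ P E = 1%E /\
    forall om, E om ->
    forall x : 'I_d -> R, (forall i, 0 <= x i <= 1) ->
      ((H_ell mu eta)%:E <=
        limn_einf (fun j : nat => log_ratio (Mtilde mu (fun w => p w om) (xprefix x j)) j))%E.
Proof.
move=> mu.
have good : forall n : nat, exists Z : set Omega, measurable Z /\ P Z = 0%E /\ forall om, ~ Z om ->
    exists k, forall j, (k <= j)%N -> forall w : word d, size w = j ->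
      (Mtilde mu (fun w => p w om) w <= (2 `^ (- (j%:R * (H_ell mu eta - (n.+1)%:R^-1))))%:E)%E.
  move=> n; apply: (good_level hpsi hnu hK halpha hbeta hmeas hprob).
  by rewrite ltrBlDr ltrDl invr_gt0 ltr0n.
have [Zf hZ] := choice good.
have mZ : forall n, measurable (Zf n) by move=> n; have [] := hZ n.
have mU : measurable (\bigcup_n Zf n) by exact: bigcupT_measurable.
exists (~` \bigcup_n Zf n); split; first exact: measurableC.
split.
  rewrite probability_setC //.
  suff -> : P (\bigcup_n Zf n) = 0%E by rewrite sube0.
  apply/eqP; rewrite eq_le measure_ge0 andbT.
  apply: (le_trans (measure_sigma_subadditive P mZ mU (@subset_refl _ _))).
  by rewrite eseries0 // => i _ _; have [_ []] := hZ i.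
move=> om hom x hx.
apply: liminf_ge => n.
have [_ [_ hk]] := hZ n.
have nZ : ~ Zf n om by move=> Zn; apply: hom; exists n.
have [k hkk] := hk om nZ.
exists k.+1 => j kj.
apply: log_ratio_ge; first by apply: leq_trans kj.
apply: hkk; first by apply: leq_trans (leqnSn k) kj.
by rewrite size_mkseq.
Qed.
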